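(* For every $i\ge0$ there exist constants $c^0_i,c^1_i,\tilde c^1_i\in\mathbb C$ such that, with $z=z_1$, $$\Pi^0_i=c^0_i\,z^{n i}\frac{d^{n i}}{dz^{n i}}F(z),\qquad \Pi^0_i\log z+\Pi^1_i=c^1_i\,z^{n i}\frac{d^{n i}}{dz^{n i}}\big(F(z)\log z+\tilde G(z)\big)+\tilde c^1_i\,\Pi^0_i .$$
   Context: Let $\theta_i=z_i\,\partial/\partial z_i$. Fix an integer $n\ge1$ and constants $a_0\neq0,a_1,a_2$. Consider the system $L_1=-n\theta_1\theta_2+\theta_1^2-a_0z_1(\theta_1+a_1)(\theta_1+a_2)$, $L_2=\theta_2^{n}-(-1)^n z_2\,(n\theta_2-\theta_1)(n\theta_2-\theta_1+1)\cdots(n\theta_2-\theta_1+n-1)$. Let $\Pi^0$ be the solution holomorphic at $0$ with $\Pi^0(0)=1$ and, for $a=1,2$, $\Pi^a=\Pi^0\log z_a+(\text{holomorphic at }0)$ solutions. Expand $\Pi^0=\sum_{i\ge0}\Pi^0_i(z_1)z_2^i$ and $\Pi^a=\Pi^0\log z_a+\sum_{i\ge0}\Pi^a_i(z_1)z_2^i$. Let $F(z)={}_2F_1(a_1,a_2;1;a_0z)=\sum_{k\ge0}\frac{(a_1)_k(a_2)_k}{(k!)^2}(a_0z)^k$ (Pochhammer symbols $(a)_k=a(a+1)\cdots(a+k-1)$), and $\tilde G(z)=\sum_{k\ge1}\frac{(a_1)_k(a_2)_k}{(k!)^2}\Big[\sum_{j=1}^2\sum_{l=0}^{k-1}\big(\tfrac1{a_j+l}-\tfrac1{1+l}\big)\Big](a_0z)^k$,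 so that $F$ and $F\log z+\tilde G$ are solutions of $\theta^2y-a_0z(\theta+a_1)(\theta+a_2)y=0$, $\theta=z\,d/dz$. *)

(* Defs.v *)
From HB Require Import structures.
From mathcomp Require Import all_boot all_order all_algebra.
Set Implicit Arguments. Unset Strict Implicit. Unset Printing Implicit Defensive.
Import Order.TTheory GRing.Theory Num.Theory.
Local Open Scope ring_scope.

Section Defs.
Variable C : numClosedFieldType.

(* formal power series in z1, z2:  ser f  ~  sum_{k,m} f k m z1^k z2^m *)
Definition ser := nat -> nat -> C.

(* "log-series" (u.1, u.2) represents  u.1 * log z1 + u.2  *)
Definition lser := (ser * ser)%type.

Definition ladd (u v : lser) : lser :=
  (fun k m => u.1 k m + v.1 k m, fun k m => u.2 k m + v.2 k m).
Definition lscale (c : C) (u : lser) : lser :=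
  (fun k m => c * u.1 k m, fun k m => c * u.2 k m).
Definition lzero : lser := (fun _ _ => 0, fun _ _ => 0).

(* theta_1 = z1 d/dz1 : theta_1 (f log z1 + g) = (theta_1 f) log z1 + theta_1 g + f *)
Definition th1 (u : lser) : lser :=
  (fun k m => k%:R * u.1 k m, fun k m => k%:R * u.2 k m + u.1 k m).
Definition th2 (u : lser) : lser :=
  (fun k m => m%:R * u.1 k m, fun k m => m%:R * u.2 k m).
Definition mz1 (u : lser) : lser :=
  (fun k m => if k is k'.+1 then u.1 k' m else 0,
   fun k m => if k is k'.+1 then u.2 k' m else 0).
Definition mz2 (u : lser) : lser :=
  (fun k m => if m is m'.+1 then u.1 k m' else 0,
   fun k m => if m is m'.+1 then u.2 k m' else 0).

Definition opj (n j : nat) (u : lser) : lser :=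
  ladd (ladd (lscale n%:R (th2 u)) (lscale (-1) (th1 u))) (lscale j%:R u).

Definition prodop (n : nat) (u : lser) : lser :=
  foldr (fun j v => opj n j v) u (iota 0 n).

Definition L1 (n : nat) (a0 a1 a2 : C) (u : lser) : lser :=
  let sh a v := ladd (th1 v) (lscale a v) in
  ladd (ladd (lscale (- n%:R) (th1 (th2 u))) (th1 (th1 u)))
       (lscale (- a0) (mz1 (sh a1 (sh a2 u)))).

Definition L2 (n : nat) (u : lser) : lser :=
  ladd (iter n th2 u) (lscale (- (-1) ^+ n) (mz2 (prodop n u))).

Definition poch (a : C) (k : nat) : C := \prod_(l < k) (a + l%:R).

(* coefficients of F(z) = 2F1(a1,a2;1;a0 z) *)
Definition Fcoef (a0 a1 a2 : C) (k : nat) : C :=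
  poch a1 k * poch a2 k / (k`!%:R ^+ 2) * a0 ^+ k.

(* coefficients of tilde G (the k = 0 coefficient is 0, the sum being empty) *)
Definition Gcoef (a0 a1 a2 : C) (k : nat) : C :=
  Fcoef a0 a1 a2 k *
  \sum_(l < k) (((a1 + l%:R)^-1 - (1 + l%:R)^-1) + ((a2 + l%:R)^-1 - (1 + l%:R)^-1)).

(* univariate formal Laurent-type series with log:  (p, q) ~ p log z + q,
   coefficients indexed by int (needed for intermediate derivatives) *)
Definition user := int -> C.
Definition luser := (user * user)%type.

Definition of_nat_ser (f : nat -> C) : user :=
  fun k => match k with Posz k' => f k' | Negz _ => 0 end.

(* d/dz (p log z + q) = p' log z + p / z + q' *)
Definition dz (u : luser) : luser :=
  (fun k => (k + 1)%:~R * u.1 (k + 1)%R,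
   fun k => (k + 1)%:~R * u.2 (k + 1)%R + u.1 (k + 1)%R).
Definition mzN (N : nat) (u : luser) : luser :=
  (fun k => u.1 (k - N%:Z)%R, fun k => u.2 (k - N%:Z)%R).
Definition zND (N : nat) (u : luser) : luser := mzN N (iter N dz u).

Definition luscale (c : C) (u : luser) : luser :=
  (fun k => c * u.1 k, fun k => c * u.2 k).
Definition luadd (u v : luser) : luser :=
  (fun k => u.1 k + v.1 k, fun k => u.2 k + v.2 k).

End Defs.

(* Main.v *)
Require Import Defs.
From HB Require Import structures.
From mathcomp Require Import all_boot all_order all_algebra.
From mathcomp Require Import ring zify.
From Stdlib Require Import FunctionalExtensionality.
Import Order.TTheory GRing.Theory Num.Theory.
Local Open Scope ring_scope.

Section S.
Variable C : numClosedFieldType.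

Fixpoint Rd (N : nat) (y : int) : C * C :=
  match N with
  | 0%N => (1, 0)
  | N'.+1 => let r := Rd N' (y + 1) in ((y + 1)%:~R * r.1, (y + 1)%:~R * r.2 + r.1)
  end.

Lemma Rd_shift N y : (Rd N.+1 y).1 = (y + N.+1%:Z)%:~R * (Rd N y).1 /\
   (Rd N.+1 y).2 = (y + N.+1%:Z)%:~R * (Rd N y).2 + (Rd N y).1.
Proof.
elim: N y => [|N IH] y /=; first by split; ring.
have [h1 h2] := IH (y + 1).
rewrite /= in h1 h2.
rewrite h1 h2; split; ring.
Qed.

Lemma Rd_neq0 N y : (0 <= y) -> (Rd N y).1 != 0.
Proof.
elim: N y => [|N IH] y hy /=; first exact: oner_neq0.
rewrite mulf_neq0 //; last by apply: IH; lia.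
rewrite intr_eq0; apply/eqP; lia.
Qed.

Lemma iter_dz N (u : luser C) k :
  (iter N (@dz C) u).1 k = (Rd N k).1 * u.1 (k + N%:Z) /\
  (iter N (@dz C) u).2 k = (Rd N k).1 * u.2 (k + N%:Z) + (Rd N k).2 * u.1 (k + N%:Z).
Proof.
elim: N k => [|N IH] k /=; first by rewrite addr0; split; ring.
have [h1 h2] := IH (k + 1).
rewrite h1 h2 (_ : k + 1 + N%:Z = k + N.+1%:Z); last by lia.
split; ring.
Qed.

Lemma zND_eq N (u : luser C) k :
  (zND N u).1 k = (Rd N (k - N%:Z)).1 * u.1 k /\
  (zND N u).2 k = (Rd N (k - N%:Z)).1 * u.2 k + (Rd N (k - N%:Z)).2 * u.1 k.
Proof.
rewrite /zND /mzN /=.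
have [h1 h2] := iter_dz N u (k - N%:Z).
by rewrite h1 h2 subrK.
Qed.

End S.
Lemma alg1 (R : comRingType) (x M r0 r1 F0 F1 a A : R) :
  M*r1 = x*r0 -> x*x*F1 = a*A*F0 -> x*M*(r1*F1) = a*A*(r0*F0).
Proof.
move=> h1 h2.
rewrite (_ : x*M*(r1*F1) = x*F1*(M*r1)); last by ring.
rewrite h1 (_ : x * F1 * (x * r0) = r0 * (x*x*F1)); last by ring.
rewrite h2; ring.
Qed.

Lemma alg2 (R : comRingType) (x M r0 r1 r0' r1' F0 F1 G0 G1 a A B : R) :
  M*r1 = x*r0 -> M*r1' + r1 = x*r0' + r0 -> x*x*F1 = a*A*F0 ->
  x*x*G1 + (x+x)*F1 = a*(A*G0 + B*F0) ->
  x*M*(r1*G1 + r1'*F1) + (x + M)*(r1*F1) = a*(A*(r0*G0 + r0'*F0) + B*(r0*F0)).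
Proof.
move=> h1 h2 h3 h4.
have h2' : M * r1' = x*r0' + r0 - r1 by rewrite -h2; ring.
rewrite (_ : x*M*(r1*G1 + r1'*F1) + (x + M)*(r1*F1) =
   x*G1*(M*r1) + x*F1*(M*r1') + x*r1*F1 + F1*(M*r1)); last by ring.
rewrite h1 h2'.
rewrite (_ : x * G1 * (x * r0) + x * F1 * (x * r0' + r0 - r1) + x * r1 * F1 + F1 * (x * r0)
  = r0 * (x*x*G1 + (x+x)*F1) + r0' * (x*x*F1)); last by ring.
rewrite h3 h4; ring.
Qed.

Section T.
Variable C : numClosedFieldType.
Variables (a0 a1 a2 : C) (N : nat).
Hypothesis ha0 : a0 != 0.
Hypothesis ha1 : forall l : nat, a1 + l%:R != 0.
Hypothesis ha2 : forall l : nat, a2 + l%:R != 0.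

Definition Aq (k : nat) := (k%:R + a1) * (k%:R + a2).
Definition Ap (k : nat) := (k%:R + a1) + (k%:R + a2).
Definition Hom (s : nat -> C) := forall k : nat,
  k.+1%:R * (k.+1%:R - N%:R) * s k.+1 = a0 * Aq k * s k.
Definition RecP (s1 s2 : nat -> C) := Hom s1 /\ forall k : nat,
  k.+1%:R * (k.+1%:R - N%:R) * s2 k.+1 + (k.+1%:R + (k.+1%:R - N%:R)) * s1 k.+1
   = a0 * (Aq k * s2 k + Ap k * s1 k).

Lemma Aq_neq0 k : a0 * Aq k != 0.
Proof. by rewrite /Aq !mulf_neq0 // addrC. Qed.

Lemma hom_zero s : Hom s -> s N = 0 -> forall k, s k = 0.
Proof.
move=> h hN.
have below : forall d k, (k + d.+1 = N)%N -> s k = 0.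
  elim=> [|d IH] k hk.
    have := h k; rewrite (_ : k.+1 = N); last by lia.
    rewrite subrr mulr0 mul0r => /esym/eqP; rewrite mulf_eq0 (negbTE (Aq_neq0 k)) /=.
    by move/eqP.
  have := h k; rewrite (IH k.+1); last by lia.
  rewrite mulr0 => /esym/eqP; rewrite mulf_eq0 (negbTE (Aq_neq0 k)) /=.
  by move/eqP.
have above : forall d, s (N + d)%N = 0.
  elim=> [|d IH]; first by rewrite addn0.
  have := h (N + d)%N; rewrite IH mulr0 => /eqP; rewrite mulf_eq0.
  case/orP; last by move/eqP; rewrite addnS.
  rewrite mulf_eq0 pnatr_eq0 /= subr_eq0 eqr_nat => /eqP; lia.
move=> k; case: (ltnP k N) => hk.
  by apply: (below (N - k.+1)%N); lia.
by rewrite -(subnKC hk) above.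
Qed.

Lemma hom_nonzero s : Hom s -> s N != 0 -> forall d, s (N + d)%N != 0.
Proof.
move=> h hN; elim=> [|d IH]; first by rewrite addn0.
apply/negP => /eqP h0.
have := h (N + d)%N; rewrite -addnS h0 mulr0 => /esym/eqP.
by rewrite mulf_eq0 (negbTE (Aq_neq0 _)) (negbTE IH).
Qed.

Lemma hom_lin s1 s2 c : Hom s1 -> Hom s2 -> Hom (fun k => s1 k - c * s2 k).
Proof.
move=> h1 h2 k /=.
transitivity (k.+1%:R * (k.+1%:R - N%:R) * s1 k.+1 - c * (k.+1%:R * (k.+1%:R - N%:R) * s2 k.+1)).
  ring.
rewrite h1 h2; ring.
Qed.

Lemma slice (p q V1 V2 : nat -> C) : RecP p q -> RecP V1 V2 -> V1 N != 0 -> p N != 0 ->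
  exists c t, (forall k, p k = c * V1 k) /\ (forall k, q k = c * V2 k + t * p k).
Proof.
move=> [hp hq] [hV1 hV2] hV1N hpN.
set c := p N / V1 N.
have e1 : forall k, p k = c * V1 k.
  have hs : Hom (fun k => p k - c * V1 k) by apply: hom_lin.
  move=> k; have := hom_zero _ hs; rewrite /= /c divfK // subrr => /(_ erefl k) /eqP.
  by rewrite subr_eq0 => /eqP.
set d := fun k => q k - c * V2 k.
have hd : Hom d.
  move=> k; rewrite /d.
  have := hq k; have := hV2 k; rewrite !e1 => h2 h1.
  apply/eqP; rewrite -subr_eq0; apply/eqP.
  transitivity ((k.+1%:R * (k.+1%:R - N%:R) * q k.+1 + (k.+1%:R + (k.+1%:R - N%:R)) * (c * V1 k.+1)
       - a0 * (Aq k * q k + Ap k * (c * V1 k))) - c * ((k.+1%:R * (k.+1%:R - N%:R) * V2 k.+1 +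
       (k.+1%:R + (k.+1%:R - N%:R)) * V1 k.+1) - (a0 * (Aq k * V2 k + Ap k * V1 k)))).
    ring.
  by rewrite h1 h2 !subrr mulr0 subrr.
set t := d N / p N.
exists c, t; split => // k.
have he : Hom (fun k => d k - t * p k) by apply: hom_lin.
have := hom_zero _ he; rewrite /= /t divfK // subrr => /(_ erefl k) /eqP.
by rewrite subr_eq0 /d subr_eq => /eqP ->; ring.
Qed.

End T.
Section U.
Variable C : numClosedFieldType.
Variables (a0 a1 a2 : C).
Hypothesis ha0 : a0 != 0.
Hypothesis ha1 : forall l : nat, a1 + l%:R != 0.
Hypothesis ha2 : forall l : nat, a2 + l%:R != 0.

Lemma fact_neq0 k : (k`!%:R : C) != 0.
Proof. by rewrite pnatr_eq0 -lt0n fact_gt0. Qed.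

Lemma nz1 k : (1 + k%:R : C) != 0.
Proof. by rewrite addrC natr1 pnatr_eq0. Qed.

Lemma FcoefS k : Fcoef a0 a1 a2 k.+1 = Fcoef a0 a1 a2 k * (a0 * Aq C a1 a2 k) / (k.+1%:R ^+ 2).
Proof.
rewrite /Fcoef /poch /Aq !big_ord_recr /= factS natrM (exprS a0).
have := fact_neq0 k; have : (k.+1%:R : C) != 0 by rewrite pnatr_eq0.
move=> h1 h2; field.
by rewrite nz1 fact_neq0.
Qed.

Lemma UF k : k.+1%:R * k.+1%:R * Fcoef a0 a1 a2 k.+1 = a0 * Aq C a1 a2 k * Fcoef a0 a1 a2 k.
Proof.
rewrite FcoefS; have : (k.+1%:R : C) != 0 by rewrite pnatr_eq0.
move=> h; field; by rewrite nz1.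
Qed.

Lemma UG k : k.+1%:R * k.+1%:R * Gcoef a0 a1 a2 k.+1 + (k.+1%:R + k.+1%:R) * Fcoef a0 a1 a2 k.+1
  = a0 * (Aq C a1 a2 k * Gcoef a0 a1 a2 k + Ap C a1 a2 k * Fcoef a0 a1 a2 k).
Proof.
rewrite /Gcoef big_ord_recr /= FcoefS /Aq /Ap.
have h : (k.+1%:R : C) != 0 by rewrite pnatr_eq0.

have := ha1 k; have := ha2 k => b2 b1.
field.
by rewrite nz1 b1 b2.
Qed.

Lemma Fcoef_neq0 k : Fcoef a0 a1 a2 k != 0.
Proof.
elim: k => [|k IH].
  by rewrite /Fcoef /poch !big_ord0 fact0 mulr1n expr1n invr1 !mulr1 oner_neq0.
rewrite FcoefS mulf_neq0 // ?invr_neq0 ?expf_neq0 ?pnatr_eq0 //.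
by rewrite mulf_neq0 // ?Aq_neq0 //.
Qed.

Definition V1 N k := (Rd C N (k%:Z - N%:Z)).1 * Fcoef a0 a1 a2 k.
Definition V2 N k := (Rd C N (k%:Z - N%:Z)).1 * Gcoef a0 a1 a2 k
   + (Rd C N (k%:Z - N%:Z)).2 * Fcoef a0 a1 a2 k.

Lemma modelRec N : RecP C a0 a1 a2 N (V1 N) (V2 N).
Proof.
have key : forall k : nat, ((k.+1%:R - N%:R) * (Rd C N (k.+1%:Z - N%:Z)).1 = k.+1%:R * (Rd C N (k%:Z - N%:Z)).1) /\
   ((k.+1%:R - N%:R) * (Rd C N (k.+1%:Z - N%:Z)).2 + (Rd C N (k.+1%:Z - N%:Z)).1
     = k.+1%:R * (Rd C N (k%:Z - N%:Z)).2 + (Rd C N (k%:Z - N%:Z)).1).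
  move=> k.
  have [s1 s2] := Rd_shift C N (k%:Z - N%:Z); rewrite /= in s1 s2.
  rewrite (_ : k%:Z - N%:Z + 1 = k.+1%:Z - N%:Z) in s1 s2; last by lia.
  have eM : ((k.+1%:Z - N%:Z)%:~R : C) = k.+1%:R - N%:R by ring.
  have ex : ((k%:Z - N%:Z + N.+1%:Z)%:~R : C) = k.+1%:R by ring.
  by rewrite eM ex in s1 s2.
split => k; have [s1 s2] := key k; rewrite /V1 /V2.
  exact: alg1 s1 (UF k).
exact: alg2 s1 s2 (UF k) (UG k).
Qed.

Lemma V1N_neq0 N : V1 N N != 0.
Proof. by rewrite /V1 mulf_neq0 ?Fcoef_neq0 // Rd_neq0 // subrr. Qed.

End U.
Section W.
Variable C : numClosedFieldType.
Variables (n : nat) (a0 a1 a2 : C) (P0 P1 : ser C).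
Hypothesis ha0 : a0 != 0.
Hypothesis ha1 : forall l : nat, a1 + l%:R != 0.
Hypothesis ha2 : forall l : nat, a2 + l%:R != 0.
Hypothesis hP0_2 : L2 n (fun _ _ => 0, P0) = lzero C.
Hypothesis hP0_0 : P0 0%N 0%N = 1.
Hypothesis hP1_1 : L1 n a0 a1 a2 (P0, P1) = lzero C.

Lemma recW i : RecP C a0 a1 a2 (n*i) (fun k => P0 k i) (fun k => P1 k i).
Proof.
split => k.
  have h := congr1 (fun u : lser C => u.1 k.+1 i) hP1_1.
  rewrite /L1 /ladd /lscale /th1 /th2 /mz1 /= in h.
  rewrite /Aq; apply/eqP; rewrite -subr_eq0; apply/eqP; rewrite -[RHS]h; ring.
have h := congr1 (fun u : lser C => u.2 k.+1 i) hP1_1.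
rewrite /L1 /ladd /lscale /th1 /th2 /mz1 /= in h.
rewrite /Aq /Ap; apply/eqP; rewrite -subr_eq0; apply/eqP; rewrite -[RHS]h; ring.
Qed.

Lemma iter_th2 (u : lser C) N k m : (iter N (@th2 C) u).2 k m = m%:R ^+ N * u.2 k m.
Proof.
elim: N => [|N IH] /=; first by rewrite expr0 mul1r.
by rewrite IH exprS mulrA.
Qed.

Lemma prod_fold (s : seq nat) (P : ser C) k m :
  (foldr (fun j v => opj n j v) (fun _ _ => 0, P) s).1 k m = 0 /\
  (foldr (fun j v => opj n j v) (fun _ _ => 0, P) s).2 k m
    = (\prod_(j <- s) (n%:R * m%:R - k%:R + j%:R)) * P k m.
Proof.
elim: s => [|j s [e1 e2]] /=; first by rewrite big_nil mul1r.
rewrite big_cons /opj /ladd /lscale /th1 /th2 /= e1 e2; split; ring.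
Qed.

Lemma step i : P0 (n * i.+1)%N i != 0 -> P0 (n * i.+1)%N i.+1 != 0.
Proof.
move=> h.
have e := congr1 (fun u : lser C => u.2 (n * i.+1)%N i.+1) hP0_2.
rewrite /L2 /ladd /lscale /mz2 /prodop /= iter_th2 in e.
have [_ e2] := prod_fold (iota 0 n) P0 (n * i.+1)%N i.
rewrite e2 in e.
apply/negP => /eqP h0; rewrite /= h0 mulr0 add0r in e; move/eqP: e.
rewrite mulf_eq0 oppr_eq0 signr_eq0 /= mulf_eq0 (negbTE h) orbF.
apply/negP; rewrite prodf_seq_neq0; apply/allP => j; rewrite mem_iota => /andP [_ hj].
rewrite (_ : n%:R * i%:R - (n * i.+1)%:R + j%:R = j%:R - n%:R :> C); last by ring.
by rewrite subr_eq0 eqr_nat; apply/eqP; lia.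
Qed.

Lemma p_neq0 i : P0 (n * i)%N i != 0.
Proof.
elim: i => [|i IH]; first by rewrite muln0 hP0_0 oner_neq0.
apply: step.
have := @hom_nonzero C a0 a1 a2 (n * i)%N ha0 ha1 ha2 _ (recW i).1 IH n.
by rewrite (_ : (n * i + n = n * i.+1)%N) //; lia.
Qed.

End W.


Theorem proposition4 (C : numClosedFieldType) (n : nat) (a0 a1 a2 : C)
  (hn : (1 <= n)%N) (ha0 : a0 != 0)
  (ha1 : forall l : nat, a1 + l%:R != 0) (ha2 : forall l : nat, a2 + l%:R != 0)
  (P0 P1 : ser C)
  (hP0_1 : L1 n a0 a1 a2 (fun _ _ => 0, P0) = lzero C)
  (hP0_2 : L2 n (fun _ _ => 0, P0) = lzero C)
  (hP0_0 : P0 0%N 0%N = 1)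
  (hP1_1 : L1 n a0 a1 a2 (P0, P1) = lzero C)
  (hP1_2 : L2 n (P0, P1) = lzero C) :
  forall i : nat, exists c0 c1 c1t : C,
    ((fun _ => 0), of_nat_ser (fun k => P0 k i))
      = luscale c0 (zND (n * i) ((fun _ => 0), of_nat_ser (Fcoef a0 a1 a2)))
    /\
    (of_nat_ser (fun k => P0 k i), of_nat_ser (fun k => P1 k i))
      = luadd (luscale c1 (zND (n * i) (of_nat_ser (Fcoef a0 a1 a2),
                                        of_nat_ser (Gcoef a0 a1 a2))))
              (luscale c1t ((fun _ => 0), of_nat_ser (fun k => P0 k i))).
Proof.
move=> i.
have [c [t [e1 e2]]] := slice C a0 a1 a2 (n * i) ha0 ha1 ha2 _ _ _ _ (recW C n a0 a1 a2 P0 P1 hP1_1 i) (modelRec C a0 a1 a2 ha0 ha1 ha2 (n * i))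
   (V1N_neq0 C a0 a1 a2 ha0 ha1 ha2 (n * i)) (p_neq0 C n a0 a1 a2 P0 P1 ha0 ha1 ha2 hP0_2 hP0_0 hP1_1 i).
exists c, c, t; split.
  rewrite /luscale; congr pair; apply: functional_extensionality => k;
  have [z1 z2] := zND_eq C (n * i) ((fun _ => 0), of_nat_ser (Fcoef a0 a1 a2)) k;
  rewrite ?z1 ?z2 /=.
    by rewrite !mulr0.
  case: k {z1 z2} => k /=; last by rewrite !(mulr0, addr0).
  by rewrite e1 /V1 mulr0 addr0.
rewrite /luadd /luscale; congr (_, _); apply: functional_extensionality => k;
have [z1 z2] := iter_dz C (n * i) (of_nat_ser (Fcoef a0 a1 a2), of_nat_ser (Gcoef a0 a1 a2)) (k - (n * i)%:Z);
rewrite /= ?z1 ?z2 subrK /=; (case: k {z1 z2} => k /=; last by rewrite !(mulr0, addr0)).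
  by rewrite e1 /V1 mulr0 addr0.
by rewrite e2 /V2.
Qed.
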